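(* Let $M$ be a finite-dimensional vector space, $[\cdot,\cdot]_M\colon M\times M\to M$ a symmetric bilinear map and $\alpha_M\colon M\to M$ a linear map. Suppose $M=V\oplus J$ for subspaces $J,V$ that are invariant under $\alpha_M$, with $[M,V]_M\subseteq V$, and suppose that $(V,[\cdot,\cdot]_V,\beta)$ is a Hom-Jacobi-Jordan algebra, where $\beta=\alpha_M|_V$ and $[\cdot,\cdot]_V$ is the restriction of $[\cdot,\cdot]_M$ to $V\times V$. Let $\alpha_J=\alpha_M|_J$, let $[\cdot,\cdot]_J\colon J\times J\to J$ and $\theta\colon J\times J\to V$ be the components in $J$ and in $V$ of the restriction of $[\cdot,\cdot]_M$ to $J\times J$ (so $[x,y]_M=[x,y]_J+\theta(x,y)$), and define $\rho\colon J\to\mathrm{End}(V)$ by $\rho(x)v=[x,v]_M$. Then $(M,[\cdot,\cdot]_M,\alpha_M)$ is a Hom-Jacobi-Jordan algebra if and only if (1) $(J,[\cdot,\cdot]_J,\alpha_J)$ is a Hom-Jacobi-Jordan algebra and (2) $(\rho,\theta)$ is a $2$-cocycle of $J$ with values in $V$.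
   Context: A Hom-Jacobi-Jordan algebra is a triple $(A,[\cdot,\cdot],\gamma)$ with $A$ a vector space, $[\cdot,\cdot]$ a symmetric bilinear map $A\times A\to A$ and $\gamma\colon A\to A$ linear such that $\gamma([x,y])=[\gamma(x),\gamma(y)]$ and $[\gamma(x),[y,z]]+[\gamma(y),[z,x]]+[\gamma(z),[x,y]]=0$ for all $x,y,z\in A$. Given Hom-Jacobi-Jordan algebras $(J,[\cdot,\cdot],\alpha)$ and $(V,[\cdot,\cdot]_V,\beta)$, a $2$-cocycle of $J$ with values in $V$ is a pair $(\rho,\theta)$ where $\rho\colon J\to\mathrm{End}(V)$ is linear and $\theta\colon J\times J\to V$ is symmetric bilinear with $\beta(\theta(x,y))=\theta(\alpha(x),\alpha(y))$, such that for all $x,y,z\in J$, $u,v\in V$: (i) $\rho(\alpha(x))\circ\beta=\beta\circ\rho(x)$; (ii) $\rho([x,y])\beta(v)=-\rho(\alpha(x))\rho(y)v-\rho(\alpha(y))\rho(x)v-[\theta(x,y),\beta(v)]_V$; (iii) $\theta(\alpha(x),[y,z])+\theta(\alpha(y),[x,z])+\theta(\alpha(z),[x,y])+\rho(\alpha(x))\theta(y,z)+\rho(\alpha(y))\theta(x,z)+\rho(\alpha(z))\theta(x,y)=0$; (iv) $\rho(\alpha(x))[u,v]_V=-[\beta(u),\rho(x)v]_V-[\beta(v),\rho(x)u]_V$. *)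

(* Defs.v *)
From HB Require Import structures.
From mathcomp Require Import all_boot all_order all_algebra.
Set Implicit Arguments. Unset Strict Implicit. Unset Printing Implicit Defensive.
Import GRing.Theory.
Local Open Scope ring_scope.

Section HJJ.
Variable K : fieldType.

Definition lin_map (A B : lmodType K) (f : A -> B) : Prop :=
  forall (a : K) (x y : A), f (a *: x + y) = a *: f x + f y.

Definition sym_bilinear (A B : lmodType K) (br : A -> A -> B) : Prop :=
  (forall x y, br x y = br y x) /\ (forall x, lin_map (br x)).

Definition HJJ (A : lmodType K) (br : A -> A -> A) (g : A -> A) : Prop :=
  [/\ sym_bilinear br, lin_map g,
      (forall x y, g (br x y) = br (g x) (g y)) &
      (forall x y z, br (g x) (br y z) + br (g y) (br z x) + br (g z) (br x y) = 0)].

Definition cocycle2 (J V : lmodType K) (brJ : J -> J -> J) (alpha : J -> J)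
    (brV : V -> V -> V) (beta : V -> V)
    (rho : J -> V -> V) (theta : J -> J -> V) : Prop :=
  [/\
      (forall x, lin_map (rho x)),
      (forall (a : K) x y v, rho (a *: x + y) v = a *: rho x v + rho y v),
      sym_bilinear theta,
      (forall x y, beta (theta x y) = theta (alpha x) (alpha y)) &
      [/\ (* (i) *) (forall x v, rho (alpha x) (beta v) = beta (rho x v)),
          (* (ii) *) (forall x y v, rho (brJ x y) (beta v) =
              - rho (alpha x) (rho y v) - rho (alpha y) (rho x v)
              - brV (theta x y) (beta v)),
          (* (iii) *) (forall x y z,
              theta (alpha x) (brJ y z) + theta (alpha y) (brJ x z)
              + theta (alpha z) (brJ x y) + rho (alpha x) (theta y z)
              + rho (alpha y) (theta x z) + rho (alpha z) (theta x y) = 0) &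
          (* (iv) *) (forall x u v, rho (alpha x) (brV u v) =
              - brV (beta u) (rho x v) - brV (beta v) (rho x u))]].

Variable M : vectType K.
Variables (br : M -> M -> M) (alphaM : M -> M) (V J : {vspace M}).

(* restriction of the bracket to V x V (lands in V since [M,V] <= V) *)
Definition brV (u w : subvs_of V) : subvs_of V := vsproj V (br (vsval u) (vsval w)).
Definition betaV (u : subvs_of V) : subvs_of V := vsproj V (alphaM (vsval u)).
Definition alphaJ (x : subvs_of J) : subvs_of J := vsproj J (alphaM (vsval x)).
Definition brJ (x y : subvs_of J) : subvs_of J :=
  vsproj J (daddv_pi J V (br (vsval x) (vsval y))).
Definition thetaJV (x y : subvs_of J) : subvs_of V :=
  vsproj V (daddv_pi V J (br (vsval x) (vsval y))).
Definition rhoJV (x : subvs_of J) (v : subvs_of V) : subvs_of V :=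
  vsproj V (br (vsval x) (vsval v)).

End HJJ.

Arguments brV {K M} br V u w.
Arguments betaV {K M} alphaM V u.
Arguments alphaJ {K M} alphaM J x.
Arguments brJ {K M} br V J x y.
Arguments thetaJV {K M} br V J x y.
Arguments rhoJV {K M} br V J x v.

(* Main.v *)
Require Import Defs.
From HB Require Import structures.
From mathcomp Require Import all_boot all_order all_algebra.
Set Implicit Arguments. Unset Strict Implicit. Unset Printing Implicit Defensive.
Import GRing.Theory.
Local Open Scope ring_scope.

Section S.
Variables (K : fieldType) (M : vectType K) (br : M -> M -> M) (al : M -> M) (V J : {vspace M}).
Hypothesis Hb : sym_bilinear br.
Hypothesis Ha : lin_map al.
Hypothesis HVJ : (V + J)%VS = fullv.
Hypothesis HcapVJ : (V :&: J)%VS = 0%VS.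
Hypothesis HaJ : forall x, x \in J -> al x \in J.
Hypothesis HaV : forall v, v \in V -> al v \in V.
Hypothesis HbV : forall x v, v \in V -> br x v \in V.

Local Notation pJ := (daddv_pi J V).
Local Notation pV := (daddv_pi V J).

Lemma pD m : pV m + pJ m = m.
Proof. by apply: daddv_pi_add => //; rewrite HVJ memvf. Qed.
Lemma pJV m : m \in V -> pJ m = 0.
Proof. move=> mV; have E := pD m; rewrite daddv_pi_id // in E. by apply: (@addrI _ m); rewrite E addr0. Qed.
Lemma pVJ m : m \in J -> pV m = 0.
Proof. move=> mJ; have E := pD m; have HJV : (J :&: V = 0)%VS by rewrite capvC. rewrite (daddv_pi_id HJV mJ) in E. by apply: (@addIr _ m); rewrite E add0r. Qed.
Lemma pJJ m : m \in J -> pJ m = m.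
Proof. by move=> mJ; rewrite daddv_pi_id // capvC. Qed.
Lemma pVV m : m \in V -> pV m = m.
Proof. by move=> mV; rewrite daddv_pi_id. Qed.
Lemma pJD m n : pJ (m + n) = pJ m + pJ n. Proof. exact: linearD. Qed.
Lemma pVD m n : pV (m + n) = pV m + pV n. Proof. exact: linearD. Qed.

Lemma linD (A B : lmodType K) (f : A -> B) : lin_map f -> forall x y, f (x + y) = f x + f y.
Proof. by move=> H x y; have := H 1 x y; rewrite !scale1r. Qed.
Lemma lin0 (A B : lmodType K) (f : A -> B) : lin_map f -> f 0 = 0.
Proof. move=> H; have E := linD H 0 0; rewrite addr0 in E. by apply: (@addrI _ (f 0)); rewrite -E addr0. Qed.
Lemma linN (A B : lmodType K) (f : A -> B) : lin_map f -> forall x, f (- x) = - f x.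
Proof. move=> H x; apply/eqP; rewrite -addr_eq0 -linD // addNr lin0 //. Qed.

Lemma bC x y : br x y = br y x. Proof. by case: Hb. Qed.
Lemma bDr x y z : br x (y + z) = br x y + br x z. Proof. by case: Hb => _ H; apply: linD. Qed.
Lemma bDl x y z : br (y + z) x = br y x + br z x. Proof. by rewrite (bC (y+z)) bDr (bC x y) (bC x z). Qed.
Lemma bNr x y : br x (- y) = - br x y. Proof. by case: Hb => _ H; apply: linN. Qed.
Lemma bNl x y : br (- y) x = - br y x. Proof. by rewrite (bC (-y)) bNr (bC x). Qed.
Lemma aD x y : al (x + y) = al x + al y. Proof. exact: linD. Qed.

Lemma vpK (U : {vspace M}) m : m \in U -> vsval (vsproj U m) = m.
Proof. exact: vsprojK. Qed.


Lemma perm6 (G : zmodType) (a1 a2 a3 c1 c2 c3 : G) :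
  a1 + a2 + a3 + c1 + c2 + c3 = (a1 + c1) + (a2 + c2) + (a3 + c3).
Proof. by rewrite [LHS](ACl ((1*4)*(2*5)*(3*6))). Qed.

Lemma pJm m : pJ m \in J. Proof. exact: memv_pi. Qed.
Lemma pVm m : pV m \in V. Proof. exact: memv_pi. Qed.

Lemma L1 w m : pJ (br w m) = pJ (br w (pJ m)).
Proof. by rewrite -{1}(pD m) bDr pJD (pJV (HbV _ (pVm _))) add0r. Qed.
Lemma L2 w m : pV (br w m) = pV (br w (pJ m)) + br w (pV m).
Proof. by rewrite -{1}(pD m) bDr pVD (pVV (HbV _ (pVm _))) addrC. Qed.

Definition Jac x y z := br (al x) (br y z) + br (al y) (br z x) + br (al z) (br x y).

Lemma JacS12 x y z : Jac x y z = Jac y x z.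
Proof. rewrite /Jac (bC z x) (bC z y) (bC x y). congr (_ + _); exact: addrC. Qed.
Lemma JacS23 x y z : Jac x y z = Jac x z y.
Proof. rewrite /Jac (bC z y) (bC x z) (bC y x). by rewrite addrAC. Qed.
Lemma JacD1 a b y z : Jac (a + b) y z = Jac a y z + Jac b y z.
Proof.
rewrite /Jac aD !bDl !bDr.
set A := br (al a) _; set B := br (al b) _; set C := br (al y) (br z a); set D := br (al y) (br z b).
set E := br (al z) (br a y); set F := br (al z) (br b y).
by rewrite (addrACA A B C D) (addrACA (A + C)).
Qed.
Lemma JacD2 a b x z : Jac x (a + b) z = Jac x a z + Jac x b z.
Proof. by rewrite !(JacS12 x) JacD1. Qed.
Lemma JacD3 a b x y : Jac x y (a + b) = Jac x y a + Jac x y b.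
Proof. by rewrite !(JacS23 x y) JacD2. Qed.


Section Fwd.
Hypothesis HM : forall x y, al (br x y) = br (al x) (al y).
Hypothesis HJ : forall x y z, Jac x y z = 0.

Lemma F1 x y : al (pJ (br x y)) = pJ (br (al x) (al y)).
Proof. by rewrite -HM -{2}(pD (br x y)) aD pJD (pJV (HaV (pVm _))) add0r (pJJ (HaJ (pJm _))). Qed.
Lemma F2 x y : al (pV (br x y)) = pV (br (al x) (al y)).
Proof. by rewrite -HM -{2}(pD (br x y)) aD pVD (pVJ (HaJ (pJm _))) addr0 (pVV (HaV (pVm _))). Qed.
Lemma F3 x y z : pJ (br (al x) (pJ (br y z))) + pJ (br (al y) (pJ (br z x)))
   + pJ (br (al z) (pJ (br x y))) = 0.
Proof. by rewrite -!L1 -!pJD -(linear0 pJ); congr (pJ _); apply: HJ. Qed.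
Lemma F4 x y z : pV (br (al x) (pJ (br y z))) + pV (br (al y) (pJ (br x z)))
   + pV (br (al z) (pJ (br x y))) + br (al x) (pV (br y z))
   + br (al y) (pV (br x z)) + br (al z) (pV (br x y)) = 0.
Proof.
have := congr1 pV (HJ x y z); rewrite /Jac !pVD (L2 (al x)) (L2 (al y)) (L2 (al z)) linear0 (bC z x).
move=> <-.
exact: perm6.
Qed.
Lemma Fi x v : br (al x) (al v) = al (br x v).
Proof. by rewrite HM. Qed.
Lemma Fii x y v : br (pJ (br x y)) (al v) =
   - br (al x) (br y v) - br (al y) (br x v) - br (pV (br x y)) (al v).
Proof.
have := HJ x y v; rewrite /Jac -{1}(pD (br x y)) bDr (bC (al v)) (bC (al v)) (bC v x).
move/eqP; rewrite addrA addrC addr_eq0 => /eqP ->.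
by rewrite !opprD.
Qed.
Lemma Fiv x u v : br (al x) (br u v) = - br (al u) (br x v) - br (al v) (br x u).
Proof.
have := HJ x u v; rewrite /Jac (bC v x).
by move/eqP; rewrite -addrA addr_eq0 => /eqP ->; rewrite opprD.
Qed.
End Fwd.


Section Bwd.
Hypothesis EJmul : forall x y, x \in J -> y \in J -> al (pJ (br x y)) = pJ (br (al x) (al y)).
Hypothesis EJjac : forall x y z, x \in J -> y \in J -> z \in J ->
  pJ (br (al x) (pJ (br y z))) + pJ (br (al y) (pJ (br z x))) + pJ (br (al z) (pJ (br x y))) = 0.
Hypothesis Eth : forall x y, x \in J -> y \in J -> al (pV (br x y)) = pV (br (al x) (al y)).
Hypothesis Ei : forall x v, x \in J -> v \in V -> br (al x) (al v) = al (br x v).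
Hypothesis Eii : forall x y v, x \in J -> y \in J -> v \in V -> br (pJ (br x y)) (al v) =
   - br (al x) (br y v) - br (al y) (br x v) - br (pV (br x y)) (al v).
Hypothesis Eiii : forall x y z, x \in J -> y \in J -> z \in J ->
   pV (br (al x) (pJ (br y z))) + pV (br (al y) (pJ (br x z)))
   + pV (br (al z) (pJ (br x y))) + br (al x) (pV (br y z))
   + br (al y) (pV (br x z)) + br (al z) (pV (br x y)) = 0.
Hypothesis Eiv : forall x u v, x \in J -> u \in V -> v \in V ->
   br (al x) (br u v) = - br (al u) (br x v) - br (al v) (br x u).
Hypothesis EVmul : forall u v, u \in V -> v \in V -> al (br u v) = br (al u) (al v).
Hypothesis EVjac : forall u v w, u \in V -> v \in V -> w \in V -> Jac u v w = 0.

Lemma Mok m n : (m \in V) || (m \in J) -> (n \in V) || (n \in J) ->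
  al (br m n) = br (al m) (al n).
Proof.
case/orP=> Hm; case/orP=> Hn; first exact: EVmul.
- by rewrite (bC (al m)) Ei // bC.
- by rewrite Ei.
rewrite -{1}(pD (br m n)) aD EJmul // Eth //. exact: pD.
Qed.

Lemma Mall m n : al (br m n) = br (al m) (al n).
Proof.
rewrite -(pD m) -(pD n) !bDl !bDr !aD !bDl !bDr.
by rewrite !Mok ?pVm ?pJm ?orbT.
Qed.

Lemma JJJ x y z : x \in J -> y \in J -> z \in J -> Jac x y z = 0.
Proof.
move=> Hx Hy Hz; rewrite -(pD (Jac x y z)).
have -> : pJ (Jac x y z) = 0 by rewrite /Jac !pJD (L1 (al x)) (L1 (al y)) (L1 (al z)); exact: EJjac.
rewrite addr0 -(Eiii Hx Hy Hz) /Jac !pVD (L2 (al x)) (L2 (al y)) (L2 (al z)) (bC z x).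
by rewrite perm6.
Qed.

Lemma JJV x y v : x \in J -> y \in J -> v \in V -> Jac x y v = 0.
Proof.
move=> Hx Hy Hv; rewrite /Jac -{1}(pD (br x y)) bDr (bC (al v)) (bC (al v)) (bC v x).
rewrite Eii //. set A := br (al x) _; set B := br (al y) _; set C := br (pV _) _.
by rewrite (addrC C) subrK -opprD subrr.
Qed.

Lemma JVV x u v : x \in J -> u \in V -> v \in V -> Jac x u v = 0.
Proof.
move=> Hx Hu Hv; rewrite /Jac Eiv // (bC v x).
set P := br (al u) _; set Q := br (al v) _.
by rewrite -opprD -addrA addNr.
Qed.

Lemma Jac0 x y z : (x \in V) || (x \in J) -> (y \in V) || (y \in J) ->
  (z \in V) || (z \in J) -> Jac x y z = 0.
Proof.
case/orP=> Hx; case/orP=> Hy; case/orP=> Hz.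
- exact: EVjac.
- by rewrite JacS12 JacS23 JacS12 JVV.
- by rewrite JacS12 JVV.
- by rewrite JacS12 JacS23 JJV.
- by rewrite JVV.
- by rewrite JacS23 JJV.
- by rewrite JJV.
- by rewrite JJJ.
Qed.

Lemma Jall x y z : Jac x y z = 0.
Proof.
rewrite -(pD x) -(pD y) -(pD z) !JacD1 !JacD2 !JacD3.
by rewrite !Jac0 ?pVm ?pJm ?orbT ?addr0.
Qed.
End Bwd.


Lemma valbrJ (X Y : subvs_of J) : vsval (brJ br V J X Y) = pJ (br (vsval X) (vsval Y)).
Proof. by rewrite /brJ vsprojK // pJm. Qed.
Lemma valth (X Y : subvs_of J) : vsval (thetaJV br V J X Y) = pV (br (vsval X) (vsval Y)).
Proof. by rewrite /thetaJV vsprojK // pVm. Qed.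
Lemma valrho (X : subvs_of J) (v : subvs_of V) : vsval (rhoJV br V J X v) = br (vsval X) (vsval v).
Proof. by rewrite /rhoJV vsprojK // HbV // subvsP. Qed.
Lemma valbrV (u w : subvs_of V) : vsval (brV br V u w) = br (vsval u) (vsval w).
Proof. by rewrite /brV vsprojK // HbV // subvsP. Qed.
Lemma valbeta (u : subvs_of V) : vsval (betaV al V u) = al (vsval u).
Proof. by rewrite /betaV vsprojK // HaV // subvsP. Qed.
Lemma valalJ (X : subvs_of J) : vsval (alphaJ al J X) = al (vsval X).
Proof. by rewrite /alphaJ vsprojK // HaJ // subvsP. Qed.

Definition valE := (valbrJ, valth, valrho, valbrV, valbeta, valalJ).

Lemma blin x c y z : br x (c *: y + z) = c *: br x y + br x z.
Proof. by case: Hb => _ H; apply: H. Qed.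
Lemma blinl x c y z : br (c *: y + z) x = c *: br y x + br z x.
Proof. by rewrite bC blin (bC x y) (bC x z). Qed.

Lemma fwd : HJJ br al ->
     HJJ (brJ br V J) (alphaJ al J) /\
     cocycle2 (brJ br V J) (alphaJ al J) (brV br V) (betaV al V)
              (rhoJV br V J) (thetaJV br V J).
Proof.
case=> _ _ HM HJ'.
have HJ : forall x y z, Jac x y z = 0 by exact: HJ'.
split.
  split.
  - split.
      by move=> X Y; apply: subvs_inj; rewrite !valbrJ bC.
    by move=> X c Y Z; apply: subvs_inj; rewrite !linearP /= !valbrJ linearP blin linearP.
  - by move=> c X Y; apply: subvs_inj; rewrite !linearP /= !valalJ linearP Ha.
  - by move=> X Y; apply: subvs_inj; rewrite !valE; apply: F1.
  - by move=> X Y Z; apply: subvs_inj; rewrite !linearD /= !valE; apply: F3.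
split.
- by move=> X c u w; apply: subvs_inj; rewrite !linearP /= !valrho linearP blin.
- by move=> c X Y v; apply: subvs_inj; rewrite !linearP /= !valrho linearP blinl.
- split.
    by move=> X Y; apply: subvs_inj; rewrite !valth bC.
  by move=> X c Y Z; apply: subvs_inj; rewrite !linearP /= !valth linearP blin linearP.
- by move=> X Y; apply: subvs_inj; rewrite !valE; apply: F2.
split.
- by move=> X v; apply: subvs_inj; rewrite !valE; apply: Fi.
- by move=> X Y v; apply: subvs_inj; rewrite !linearB /= ?linearN /= !valE; apply: Fii.
- by move=> X Y Z; apply: subvs_inj; rewrite !linearD /= !valE; apply: F4.
- by move=> X u v; apply: subvs_inj; rewrite !linearB /= ?linearN /= !valE; apply: Fiv.
Qed.


Lemma bwd : HJJ (brV br V) (betaV al V) ->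
     HJJ (brJ br V J) (alphaJ al J) /\
     cocycle2 (brJ br V J) (alphaJ al J) (brV br V) (betaV al V)
              (rhoJV br V J) (thetaJV br V J) -> HJJ br al.
Proof.
case=> _ _ HVm HVj [[_ _ HJm HJj] [_ _ _ Hth [Hi Hii Hiii Hiv]]].
have EJmul : forall x y, x \in J -> y \in J -> al (pJ (br x y)) = pJ (br (al x) (al y)).
  move=> x y Hx Hy; have H := congr1 vsval (HJm (vsproj J x) (vsproj J y)).
  by rewrite !valE !vsprojK // in H.
have EJjac : forall x y z, x \in J -> y \in J -> z \in J ->
  pJ (br (al x) (pJ (br y z))) + pJ (br (al y) (pJ (br z x))) + pJ (br (al z) (pJ (br x y))) = 0.
  move=> x y z Hx Hy Hz; have H := congr1 vsval (HJj (vsproj J x) (vsproj J y) (vsproj J z)).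
  rewrite !linearD /= !valE !vsprojK // in H; exact: H.
have Eth : forall x y, x \in J -> y \in J -> al (pV (br x y)) = pV (br (al x) (al y)).
  move=> x y Hx Hy; have H := congr1 vsval (Hth (vsproj J x) (vsproj J y)).
  by rewrite !valE !vsprojK // in H.
have Ei : forall x v, x \in J -> v \in V -> br (al x) (al v) = al (br x v).
  move=> x v Hx Hv; have H := congr1 vsval (Hi (vsproj J x) (vsproj V v)).
  by rewrite !valE !vsprojK // in H.
have Eii : forall x y v, x \in J -> y \in J -> v \in V -> br (pJ (br x y)) (al v) =
   - br (al x) (br y v) - br (al y) (br x v) - br (pV (br x y)) (al v).
  move=> x y v Hx Hy Hv; have H := congr1 vsval (Hii (vsproj J x) (vsproj J y) (vsproj V v)).
  rewrite !linearB /= ?linearN /= !valE !vsprojK // in H; exact: H.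
have Eiii : forall x y z, x \in J -> y \in J -> z \in J ->
   pV (br (al x) (pJ (br y z))) + pV (br (al y) (pJ (br x z)))
   + pV (br (al z) (pJ (br x y))) + br (al x) (pV (br y z))
   + br (al y) (pV (br x z)) + br (al z) (pV (br x y)) = 0.
  move=> x y z Hx Hy Hz; have H := congr1 vsval (Hiii (vsproj J x) (vsproj J y) (vsproj J z)).
  rewrite !linearD /= !valE !vsprojK // in H; exact: H.
have Eiv : forall x u v, x \in J -> u \in V -> v \in V ->
   br (al x) (br u v) = - br (al u) (br x v) - br (al v) (br x u).
  move=> x u v Hx Hu Hv; have H := congr1 vsval (Hiv (vsproj J x) (vsproj V u) (vsproj V v)).
  rewrite !linearB /= ?linearN /= !valE !vsprojK // in H; exact: H.
have EVmul : forall u v, u \in V -> v \in V -> al (br u v) = br (al u) (al v).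
  move=> u v Hu Hv; have H := congr1 vsval (HVm (vsproj V u) (vsproj V v)).
  by rewrite !valE !vsprojK // in H.
have EVjac : forall u v w, u \in V -> v \in V -> w \in V -> Jac u v w = 0.
  move=> u v w Hu Hv Hw; have H := congr1 vsval (HVj (vsproj V u) (vsproj V v) (vsproj V w)).
  rewrite !linearD /= !valE !vsprojK // in H; exact: H.
split => //.
- by move=> x y; apply: Mall.
- by move=> x y z; apply: Jall.
Qed.

End S.

Theorem theorem2p3 (K : fieldType) (M : vectType K)
    (br : M -> M -> M) (alphaM : M -> M) (V J : {vspace M}) :
  sym_bilinear br ->
  lin_map alphaM ->
  (V + J)%VS = fullv ->
  (V :&: J)%VS = 0%VS ->
  (forall x, x \in J -> alphaM x \in J) ->
  (forall v, v \in V -> alphaM v \in V) ->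
  (forall x v, v \in V -> br x v \in V) ->
  HJJ (brV br V) (betaV alphaM V) ->
  (HJJ br alphaM <->
     HJJ (brJ br V J) (alphaJ alphaM J) /\
     cocycle2 (brJ br V J) (alphaJ alphaM J) (brV br V) (betaV alphaM V)
              (rhoJV br V J) (thetaJV br V J)).
Proof.
move=> Hb Ha HVJ Hcap HaJ HaV HbV HV; split.
- exact: fwd.
- exact: bwd.
Qed.
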